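(* Let $g(v;a)=v(1-v)(v-a)$, $k>0$, $a\in(0,\frac12)$, and $A\in(a,\frac{a+1}{3})$. Then $$d^\diamond(A;a)=\frac{g'(A;a)}{k+1},$$ where $g'=\partial_v g$.
   Context: $d^\diamond(A;a)=\inf\{d>0:\ d(k+1)(A-v)-g(A;a)\ge -g(v;a)\ \text{for all }v\in[0,A]\}$. *)

(* Defs.v *)
From HB Require Import structures.
From mathcomp Require Import all_boot all_order all_algebra.
From mathcomp Require Import all_classical all_reals all_analysis.
Set Implicit Arguments. Unset Strict Implicit. Unset Printing Implicit Defensive.
Import Order.TTheory GRing.Theory Num.Theory.
Local Open Scope classical_set_scope.
Local Open Scope ring_scope.

Definition g {R : realType} (v a : R) : R := v * (1 - v) * (v - a).

Definition d_diamond {R : realType} (k A a : R) : R :=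
  inf [set d : R | 0 < d /\
        forall v : R, 0 <= v <= A -> - g v a <= d * (k + 1) * (A - v) - g A a].

(* Main.v *)
Require Import Defs.
From HB Require Import structures.
From mathcomp Require Import all_boot all_order all_algebra.
From mathcomp Require Import all_classical all_reals all_analysis.
Import Order.TTheory GRing.Theory Num.Theory.
Local Open Scope ring_scope.
From mathcomp Require Import ring lra.

Lemma dg (R : realType) (a A : R) :
  derive1 (fun v : R => g v a) A = - 3 * A ^+ 2 + 2 * (1 + a) * A - a.
Proof.
rewrite derive1E /g.
have H : is_derive A (1:R) (fun v : R => v * (1 - v) * (v - a)) (- 3 * A ^+ 2 + 2 * (1 + a) * A - a).
  apply: is_derive_eq.
  rewrite /GRing.scale /=. lra.
by apply: derive_val.
Qed.

Local Open Scope classical_set_scope.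
Theorem lemma7p2 (R : realType) (k a A : R) :
  0 < k -> 0 < a -> a < 1 / 2 -> a < A -> A < (a + 1) / 3 ->
  d_diamond k A a = derive1 (fun v : R => g v a) A / (k + 1).
Proof.
move=> k0 a0 ah aA Ah.
rewrite dg; set L := - 3 * A ^+ 2 + 2 * (1 + a) * A - a.
have A3 : 3 * A < a + 1 by move: Ah; rewrite ltr_pdivlMr //; lra.
have Lpos : 0 < L.
  have : 0 < (A - a) * (1 - A) by apply: mulr_gt0; lra.
  rewrite /L; nra.
have k1 : 0 < k + 1 by lra.
have key : forall v, 0 <= v <= A -> g A a - g v a = (A - v) * (L - (A - v) * (1 + a - v - 2 * A)).
  by move=> v _; rewrite /g /L; ring.
have Lin : [set d : R | 0 < d /\
        forall v : R, 0 <= v <= A -> - g v a <= d * (k + 1) * (A - v) - g A a] (L / (k + 1)).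
  split; first by apply: divr_gt0.
  move=> v /andP[v0 vA].
  rewrite mulfVK ?gt_eqF //.
  suff : g A a - g v a <= L * (A - v) by lra.
  rewrite key ?v0 ?vA // mulrC.
  apply: ler_wpM2r; first lra.
  have : 0 <= (A - v) * (1 + a - v - 2 * A) by apply: mulr_ge0; lra.
  lra.
rewrite /d_diamond; apply/eqP; rewrite eq_le; apply/andP; split.
  apply: ge_inf => //; exists 0 => d [] d0 _; exact: ltW.
apply: lb_le_inf; first by exists (L / (k + 1)).
move=> d [d0 Hd].
rewrite ler_pdivrMr //.
rewrite leNgt; apply/negP => Hlt.
set c := d * (k + 1) in Hlt Hd.
set e := Num.min A ((L - c) / (2 * (1 + a))).
have e0 : 0 < e by rewrite lt_min; apply/andP; split; [lra| apply: divr_gt0; lra].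
have eA : e <= A by rewrite ge_min lexx.
have ee : e <= (L - c) / (2 * (1 + a)) by rewrite ge_min lexx orbT.
have ee' : e * (2 * (1 + a)) <= L - c by rewrite -ler_pdivlMr //; lra.
have := Hd (A - e).
have -> : 0 <= A - e <= A by apply/andP; split; lra.
move=> /(_ isT) H.
have := key (A - e).
have -> : 0 <= A - e <= A by apply/andP; split; lra.
move=> /(_ isT).
have -> : A - (A - e) = e by ring.
move=> K.
have Hc : g A a - g (A - e) a <= c * e.
  move: H; rewrite -/c; have -> : A - (A - e) = e by ring.
  lra.
rewrite K in Hc.
have : e * (1 + a - (A - e) - 2 * A) <= e * (1 + a).
  apply: ler_wpM2l; lra.
move=> H2.
have : e * (L - e * (1 + a - (A - e) - 2 * A)) <= c * e by [].
nra.
Qed.
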